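(* Let $n\ge 3$, let $F\subseteq E(BH_n)$ with $|F|=4n-5$ and $\delta(BH_n-F)\ge 2$. Then at least one of the following holds: (1) there is an integer $m\in\{0,1,\dots,n-1\}$ such that $|F\cap\partial D_m|\ge 3$ and $\delta(BH_n-F-\partial D_m)\ge 2$; (2) there are two integers $m,m'\in\{0,1,\dots,n-1\}$ such that $|F\cap\partial D_m|\ge 2$ and $|F\cap\partial D_{m'}|\ge 2$, and moreover, for each $k\in\{m,m'\}$, the graph $BH_n-F-\partial D_k$ has no isolated vertex and at most one vertex of degree $1$.
   Context: The $n$-dimensional balanced hypercube $BH_n$ has vertex set $\{0,1,2,3\}^n$, vertices written $(a_0,a_1,\dots,a_{n-1})$. A vertex $(a_0,a_1,\dots,a_{n-1})$ is adjacent exactly to the $2n$ vertices $((a_0\pm 1)\bmod 4,a_1,\dots,a_{n-1})$ and $((a_0\pm1)\bmod 4,a_1,\dots,a_{i-1},(a_i+(-1)^{a_0})\bmod 4,a_{i+1},\dots,a_{n-1})$ for $1\le i\le n-1$. An edge $(u,v)$ is a $0$-dimension edge if $u,v$ differ only in the coordinate $a_0$; it is an $i$-dimension edge ($1\le i\le n-1$) if $u,v$ differ in the coordinates $a_0$ and $a_i$. $\partial D_d$ denotes the set of all $d$-dimension edges. For an edge set $S$, $BH_n-F-S$ is the graph on $V(BH_n)$ with edge set $E(BH_n)\setminus(F\cup S)$. *)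

(* Defs.v *)
From mathcomp Require Import all_boot.
Set Implicit Arguments. Unset Strict Implicit. Unset Printing Implicit Defensive.

(* Vertices of BH_n: functions 'I_n -> {0,1,2,3}; coordinate a_0 is the
   index with value 0. *)
Definition BHV (n : nat) := {ffun 'I_n -> 'I_4}.

(* The adjacency relation of BH_n, written as in the definition:
   v = ((a_0 +- 1) mod 4, a_1, ..., a_{n-1})  or
   v = ((a_0 +- 1) mod 4, ..., (a_i + (-1)^{a_0}) mod 4, ...) for 1<=i<=n-1. *)
Definition bh_adj (n : nat) (u v : BHV n) : bool :=
  [exists i0 : 'I_n, (val i0 == 0) &&
    (((val (v i0) == (val (u i0) + 1) %% 4) ||
      (val (v i0) == (val (u i0) + 3) %% 4)) &&
     ([forall j : 'I_n, (val j != 0) ==> (v j == u j)] ||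
      [exists i : 'I_n, (val i != 0) &&
         (val (v i) == (val (u i) + (if odd (val (u i0)) then 3 else 1)) %% 4) &&
         [forall j : 'I_n, ((val j != 0) && (j != i)) ==> (v j == u j)]]))].

Definition bh_edges (n : nat) : {set {set BHV n}} :=
  [set e | [exists u : BHV n, exists v : BHV n, bh_adj u v && (e == [set u; v])]].

Definition diffc (n : nat) (u v : BHV n) : {set 'I_n} := [set j | u j != v j].

(* \partial D_d : the set of all d-dimension edges.  A 0-dimension edge
   differs only in a_0; a d-dimension edge (1<=d) differs exactly in a_0, a_d. *)
Definition dimD (n : nat) (d : nat) : {set {set BHV n}} :=
  [set e in bh_edges n | [exists u : BHV n, exists v : BHV n,
     bh_adj u v && (e == [set u; v]) &&
     (diffc u v == [set j : 'I_n | (val j == 0) || (val j == d)])]].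

Definition deg_minus (n : nat) (S : {set {set BHV n}}) (v : BHV n) : nat :=
  #|[set u : BHV n | bh_adj v u && ([set v; u] \notin S)]|.

Definition mindeg_ge2 (n : nat) (S : {set {set BHV n}}) : Prop :=
  forall v : BHV n, 2 <= deg_minus S v.

Definition noiso_atmost1_deg1 (n : nat) (S : {set {set BHV n}}) : Prop :=
  (forall v : BHV n, 0 < deg_minus S v) /\
  #|[set v : BHV n | deg_minus S v == 1]| <= 1.

(* Main.v *)
Require Import Defs.
From mathcomp Require Import all_boot zify.
Set Implicit Arguments. Unset Strict Implicit. Unset Printing Implicit Defensive.


Definition shift4 (a : 'I_4) (k : nat) : 'I_4 := inord ((val a + k) %% 4).

Lemma shift4E a k : val (shift4 a k) = (val a + k) %% 4.
Proof. by rewrite /shift4 /= inordK // ltn_pmod. Qed.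

Definition tw (a : 'I_4) : nat := if odd a then 3 else 1.

Definition nb (n : nat) (v : BHV n.+1) (s d : nat) : BHV n.+1 :=
  [ffun j => if val j == 0 then shift4 (v j) s
             else if val j == d then shift4 (v j) (tw (v ord0)) else v j].

Definition Sd (n : nat) (d : nat) : {set 'I_n} := [set j : 'I_n | (val j == 0) || (val j == d)].

Lemma bhv_ext n (u w : BHV n) : (forall j, u j = w j) -> u = w.
Proof. by move=> h; apply/ffunP. Qed.

Lemma arith_shift_ne (a : 'I_4) k : (k == 1) || (k == 3) -> shift4 a k != a.
Proof.
move=> hk; apply/eqP => /(congr1 val); rewrite shift4E.
case: a => [[|[|[|[|a]]]] ha] //=; by case/orP: hk => /eqP -> .
Qed.

Lemma tw13 a : (tw a == 1) || (tw a == 3).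
Proof. by rewrite /tw; case: (odd a). Qed.

Lemma nb_ord0 n (v : BHV n.+1) s d : nb v s d ord0 = shift4 (v ord0) s.
Proof. by rewrite /nb ffunE. Qed.

Lemma nb_adj n (v : BHV n.+1) s d : (s == 1) || (s == 3) -> d < n.+1 -> bh_adj v (nb v s d).
Proof.
move=> hs hd; apply/existsP; exists ord0; rewrite eqxx /=.
rewrite nb_ord0 shift4E; apply/andP; split.
  by case/orP: hs => /eqP ->; rewrite eqxx ?orbT.
case: (d =P 0) => [d0|/eqP dn0].
  apply/orP; left; apply/forallP => j; apply/implyP => hj.
  by rewrite /nb ffunE (negbTE hj) d0 (negbTE hj).
apply/orP; right; apply/existsP; exists (Ordinal hd) => /=.
rewrite dn0 /nb ffunE /= (negbTE dn0) eqxx shift4E /tw eqxx /=.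
apply/forallP => j; apply/implyP => /andP [hj hjd].
rewrite ffunE (negbTE hj).
have -> : (val j == d) = false by apply/negbTE; apply: contra hjd => /eqP h; apply/eqP/val_inj.
by [].
Qed.

Lemma adj_nb n (v u : BHV n.+1) : bh_adj v u ->
  exists s d, [/\ (s == 1) || (s == 3), d < n.+1 & u = nb v s d].
Proof.
case/existsP => i /and3P [/eqP i0 hs hrest].
have ei : i = ord0 by apply/val_inj.
subst i.
have [s [hs' hus]] : exists s, ((s == 1) || (s == 3)) /\ val (u ord0) = (val (v ord0) + s) %% 4.
  by case/orP: hs => /eqP h; [exists 1 | exists 3].
case/orP: hrest => [/forallP hall | /existsP [k /andP [/andP [hk hku] /forallP hoth]]].
  exists s, 0; split => //; apply: bhv_ext => j; rewrite ffunE.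
  case: eqP => [j0|/eqP jn0]. 
    have -> : j = ord0 by apply/val_inj.
    by apply/val_inj; rewrite shift4E hus.
  by rewrite ?(negbTE jn0); apply/eqP; exact: (implyP (hall j) jn0).
exists s, (val k); split; [done | exact: ltn_ord |]; apply: bhv_ext => j; rewrite ffunE.
case: eqP => [j0|/eqP jn0].
  have -> : j = ord0 by apply/val_inj.
  by apply/val_inj; rewrite shift4E hus.
rewrite ?(negbTE jn0).
case: eqP => [jk|/eqP jnk].
  have -> : j = k by apply/val_inj.
  by apply/val_inj; rewrite shift4E (eqP hku) /tw.
apply/eqP; apply: (implyP (hoth j)); rewrite jn0 /=.
by apply: contra jnk => /eqP ->.
Qed.


Lemma ar1 a s : a < 4 -> (s == 1) || (s == 3) -> ((a + s) %% 4 + (4 - s)) %% 4 = a.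
Proof. by case: a => [|[|[|[|a]]]] // _; case/orP => /eqP ->. Qed.

Lemma ar2 a b s : a < 4 -> b < 4 -> (s == 1) || (s == 3) ->
  ((b + (if odd a then 3 else 1)) %% 4 + (if odd ((a + s) %% 4) then 3 else 1)) %% 4 = b.
Proof.
by case: a => [|[|[|[|a]]]] // _; case: b => [|[|[|[|b]]]] // _; case/orP => /eqP ->.
Qed.

Lemma ar3 a s : a < 4 -> (s == 1) || (s == 3) -> odd ((a + s) %% 4) = ~~ odd a.
Proof. by case: a => [|[|[|[|a]]]] // _; case/orP => /eqP ->. Qed.

Lemma s13 s : (s == 1) || (s == 3) -> (4 - s == 1) || (4 - s == 3).
Proof. by case/orP => /eqP ->. Qed.

Lemma nb_sym n (v : BHV n.+1) s d : (s == 1) || (s == 3) -> d < n.+1 ->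
  nb (nb v s d) (4 - s) d = v.
Proof.
move=> hs hd; apply: bhv_ext => j; rewrite /nb !ffunE.
case: eqP => [j0|/eqP jn0].
  by apply: val_inj; rewrite /= !shift4E; exact: ar1 (ltn_ord _) hs.
case: eqP => [jd|/eqP jnd] //=.
apply: val_inj; rewrite /= !shift4E /tw shift4E.
by apply: ar2 => //; apply: ltn_ord.
Qed.

Lemma adj_sym n (u v : BHV n.+1) : bh_adj u v -> bh_adj v u.
Proof.
case/adj_nb => s [d [hs hd ->]].
have := nb_adj (nb u s d) (s13 hs) hd.
by rewrite nb_sym.
Qed.

Lemma adj_irr n (u : BHV n.+1) : ~~ bh_adj u u.
Proof.
apply/negP; case/adj_nb => s [d [hs hd]] /(congr1 (fun w : BHV n.+1 => w ord0)).
rewrite nb_ord0 => h; move: (arith_shift_ne (u ord0) hs); by rewrite -h eqxx.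
Qed.

Lemma adj_par n (u v : BHV n.+1) : bh_adj u v -> odd (v ord0) = ~~ odd (u ord0).
Proof.
by case/adj_nb => s [d [hs hd ->]]; rewrite nb_ord0 shift4E ar3 //; apply: ltn_ord.
Qed.

Lemma diffc_nb n (v : BHV n.+1) s d : (s == 1) || (s == 3) -> d < n.+1 ->
  diffc v (nb v s d) = Sd n.+1 d.
Proof.
move=> hs hd; apply/setP => j; rewrite !inE /nb ffunE /=.
case: (nat_of_ord j =P 0) => [j0|jn0] /=.
  by rewrite eq_sym (arith_shift_ne _ hs).
case: (nat_of_ord j =P d) => [jd|jnd] /=.
  by rewrite eq_sym (arith_shift_ne _ (tw13 _)).
by rewrite eqxx.
Qed.

Lemma diffc_sym n (u v : BHV n) : diffc u v = diffc v u.
Proof. by apply/setP => j; rewrite !inE eq_sym. Qed.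

Lemma Sd_inj n d d' : d < n -> d' < n -> Sd n d = Sd n d' -> d = d'.
Proof.
move=> hd hd' e.
have h1 : (Ordinal hd \in Sd n d') by rewrite -e !inE eqxx orbT.
have h2 : (Ordinal hd' \in Sd n d) by rewrite e !inE eqxx orbT.
rewrite !inE /= in h1 h2.
case/orP: h1 => /eqP h1; case/orP: h2 => /eqP h2; lia.
Qed.

Lemma pairset_eq (T : finType) (a b a' b' : T) : [set a; b] = [set a'; b'] ->
  (a = a' /\ b = b') \/ (a = b' /\ b = a').
Proof.
move=> e.
have ha : a \in [set a'; b'] by rewrite -e !inE eqxx.
have hb : b \in [set a'; b'] by rewrite -e !inE eqxx orbT.
have ha' : a' \in [set a; b] by rewrite e !inE eqxx.
have hb' : b' \in [set a; b] by rewrite e !inE eqxx orbT.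
rewrite !inE in ha hb ha' hb'.
case/orP: ha => /eqP ha; case/orP: hb => /eqP hb; subst.
- by left; split => //; case/orP: hb' => /eqP.
- by left.
- by right.
- by right; split => //; case/orP: ha' => /eqP.
Qed.

Lemma pairset_in (T : finType) (a b x y : T) : x \in [set a; b] -> y \in [set a; b] -> x != y ->
  [set a; b] = [set x; y].
Proof.
rewrite !inE => /orP [] /eqP -> /orP [] /eqP -> //; rewrite ?eqxx // => _.
by apply/setP => z; rewrite !inE orbC.
Qed.

Lemma edgeP n (e : {set BHV n}) : reflect (exists u v, bh_adj u v /\ e = [set u; v]) (e \in bh_edges n).
Proof.
rewrite inE; apply: (iffP existsP) => [[u /existsP [v /andP [h /eqP ->]]] | [u [v [h ->]]]].
  by exists u, v.
by exists u; apply/existsP; exists v; rewrite h eqxx.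
Qed.

Lemma dimDP n (d : nat) (e : {set BHV n}) : reflect
  (exists u v, [/\ bh_adj u v, e = [set u; v] & diffc u v = Sd n d]) (e \in dimD n d).
Proof.
rewrite inE; apply: (iffP andP) => [[_ /existsP [u /existsP [v /andP [/andP [h /eqP ->] /eqP hd]]]] | [u [v [h -> hd]]]].
  by exists u, v.
split; first by apply/edgeP; exists u, v.
by apply/existsP; exists u; apply/existsP; exists v; rewrite h eqxx hd /Sd eqxx.
Qed.

Lemma dimD_uniq n d d' (e : {set BHV n}) : d < n -> d' < n -> e \in dimD n d -> e \in dimD n d' -> d = d'.
Proof.
move=> hd hd' /dimDP [u [v [h1 -> e1]]] /dimDP [u' [v' [h2 e2 e3]]].
apply: Sd_inj hd hd' _; rewrite -e1 -e3.
by case: (pairset_eq e2) => [[-> ->]|[-> ->]] //; rewrite diffc_sym.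
Qed.

Lemma nb_dimD n (v : BHV n.+1) s d : (s == 1) || (s == 3) -> d < n.+1 ->
  [set v; nb v s d] \in dimD n.+1 d.
Proof.
move=> hs hd; apply/dimDP; exists v, (nb v s d); split => //; first exact: nb_adj.
exact: diffc_nb.
Qed.

Lemma edge_dim n (e : {set BHV n.+1}) : e \in bh_edges n.+1 -> exists2 d, d < n.+1 & e \in dimD n.+1 d.
Proof.
case/edgeP => u [v [/adj_nb [s [d [hs hd ->]]] ->]].
by exists d => //; apply: nb_dimD.
Qed.

Lemma dimD_sub n d (e : {set BHV n}) : e \in dimD n d -> e \in bh_edges n.
Proof. by rewrite inE => /andP []. Qed.


Definition star n (v : BHV n) : {set {set BHV n}} := [set e in bh_edges n | v \in e].

Lemma star_nb n (v : BHV n.+1) e : e \in star v ->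
  exists s d, [/\ (s == 1) || (s == 3), d < n.+1 & e = [set v; nb v s d]].
Proof.
rewrite inE => /andP [/edgeP [a [b [hab ->]]]]; rewrite !inE => /orP [] /eqP ->.
  by case/adj_nb: hab => s [d [hs hd ->]]; exists s, d.
case/adj_nb: (adj_sym hab) => s [d [hs hd ->]]; exists s, d; split => //.
by rewrite setUC.
Qed.

Lemma nb_star n (v : BHV n.+1) s d : (s == 1) || (s == 3) -> d < n.+1 ->
  [set v; nb v s d] \in star v.
Proof.
move=> hs hd; rewrite inE; apply/andP; split; last by rewrite !inE eqxx.
apply/edgeP; exists v, (nb v s d); split => //; exact: nb_adj.
Qed.

Lemma star_dim n (v : BHV n.+1) d : d < n.+1 ->
  star v :&: dimD n.+1 d = [set [set v; nb v 1 d]; [set v; nb v 3 d]].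
Proof.
move=> hd; apply/setP => e; rewrite inE; apply/andP/idP.
  case=> /star_nb [s [d' [hs hd' ->]]] hD.
  have ed := dimD_uniq hd hd' hD (nb_dimD v hs hd'); subst d'.
  by rewrite !inE; case/orP: hs => /eqP ->; rewrite eqxx ?orbT.
case/set2P => ->; split; by [apply: nb_star | apply: nb_dimD].
Qed.

Lemma card_star_dim n (v : BHV n.+1) d : d < n.+1 -> #|star v :&: dimD n.+1 d| = 2.
Proof.
move=> hd; rewrite star_dim // cards2.
suff -> : ([set v; nb v 1 d] != [set v; nb v 3 d]) by [].
apply/negP => /eqP /pairset_eq [[_ h] | [h _]].
  move: (congr1 (fun w : BHV n.+1 => val (w ord0)) h); rewrite !nb_ord0 !shift4E.
  by case: (v ord0) => [[|[|[|[|]]]] ?].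
move: (arith_shift_ne (v ord0) (isT : (3 == 1) || (3 == 3))).
by rewrite -(nb_ord0 v 3 d) -h eqxx.
Qed.

Lemma sum_dim_edge n (e : {set BHV n.+1}) : e \in bh_edges n.+1 ->
  \sum_(d < n.+1) (e \in dimD n.+1 d) = 1.
Proof.
case/edge_dim => d hd he.
rewrite (bigD1 (Ordinal hd)) //= he big1 // => i /eqP hi.
case: (boolP (e \in dimD n.+1 i)) => // hi'; exfalso; apply: hi; apply/val_inj => /=.
exact: dimD_uniq (ltn_ord i) hd hi' he.
Qed.

Lemma card_part n (X : {set {set BHV n.+1}}) : X \subset bh_edges n.+1 ->
  #|X| = \sum_(d < n.+1) #|X :&: dimD n.+1 d|.
Proof.
move=> hX.
have h1 : forall d, #|X :&: dimD n.+1 d| = \sum_(e in X) (e \in dimD n.+1 d).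
  move=> d; rewrite -sum1_card big_mkcond [RHS]big_mkcond /=; apply: eq_bigr => e _.
  by rewrite inE; case: (e \in X); case: (e \in dimD n.+1 d).
rewrite (eq_bigr _ (fun (d : 'I_n.+1) _ => h1 d)) exchange_big /= -sum1_card.
apply: eq_bigr => e he; rewrite sum_dim_edge //; exact: (subsetP hX).
Qed.

Lemma deg_star n (S : {set {set BHV n.+1}}) v : deg_minus S v = #|star v :\: S|.
Proof.
rewrite /deg_minus.
set U := [set u | _].
have inj : {in U &, injective (fun u => [set v; u])}.
  move=> u u'; rewrite !inE => /andP [hu _] /andP [hu' _] /pairset_eq [[_ ->] | [h1 h2]] //.
  by move: hu; rewrite h2 (negbTE (adj_irr v)).
suff -> : star v :\: S = [set [set v; u] | u in U] by rewrite (card_in_imset inj).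
apply/setP => e; apply/idP/imsetP.
  rewrite inE => /andP [hS /star_nb [s [d [hs hd he]]]].
  exists (nb v s d) => //; rewrite inE nb_adj //= -he //.
case=> u; rewrite inE => /andP [hu hS] ->; rewrite inE hS /= inE; apply/andP; split; last by rewrite !inE eqxx.
by apply/edgeP; exists v, u.
Qed.

Lemma card_star n (v : BHV n.+1) : #|star v| = 2 * n.+1.
Proof.
rewrite card_part; last by apply/subsetP => e; rewrite inE => /andP [].
rewrite (eq_bigr (fun _ => 2)); last by move=> d _; rewrite card_star_dim.
by rewrite sum_nat_const card_ord muln2 mul2n.
Qed.


Lemma cardU_le (T : finType) (X Y : {set T}) : #|X :|: Y| <= #|X| + #|Y|.
Proof. have := cardsUI X Y; lia. Qed.

Lemma bonf3 (T : finType) (X Y Z : {set T}) :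
  #|X| + #|Y| + #|Z| <= #|X :|: Y :|: Z| + #|X :&: Y| + #|Y :&: Z| + #|X :&: Z|.
Proof.
have h1 := cardsUI (X :|: Y) Z.
have h2 := cardsUI X Y.
have h3 : #|(X :|: Y) :&: Z| <= #|X :&: Z| + #|Y :&: Z|.
  by rewrite setIUl; apply: cardU_le.
lia.
Qed.

Lemma bonf4 (T : finType) (X Y Z W : {set T}) :
  #|X| + #|Y| + #|Z| + #|W| <= #|X :|: Y :|: Z :|: W| + #|X :&: Y| + #|Y :&: Z| + #|X :&: Z|
     + #|X :&: W| + #|Y :&: W| + #|Z :&: W|.
Proof.
have h1 := cardsUI (X :|: Y :|: Z) W.
have h2 := bonf3 X Y Z.
have h3 : #|(X :|: Y :|: Z) :&: W| <= #|X :&: W| + #|Y :&: W| + #|Z :&: W|.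
  rewrite !setIUl; apply: leq_trans (cardU_le _ _) _.
  by rewrite leq_add2r cardU_le.
lia.
Qed.

Definition Av n (F : {set {set BHV n}}) v := F :&: star v.
Definition fv n (F : {set {set BHV n}}) v := #|Av F v|.
Definition fd n (F : {set {set BHV n}}) v d := #|Av F v :&: dimD n d|.
Definition cc n (F : {set {set BHV n}}) d := #|F :&: dimD n d|.
Definition sp n (F : {set {set BHV n}}) u w d := #|Av F u :&: Av F w :&: dimD n d|.

Lemma inStar n (v : BHV n) e : (e \in star v) = (e \in bh_edges n) && (v \in e).
Proof. by rewrite /star in_set. Qed.

Lemma inAv n (F : {set {set BHV n}}) v e : (e \in Av F v) = [&& e \in F, e \in bh_edges n & v \in e].
Proof. by rewrite /Av /star !in_setI in_set. Qed.

Lemma Av_sub n (F : {set {set BHV n.+1}}) v : Av F v \subset bh_edges n.+1.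
Proof. by apply/subsetP => e; rewrite inAv => /and3P []. Qed.

Lemma f_sum n (F : {set {set BHV n.+1}}) v : fv F v = \sum_(d < n.+1) fd F v d.
Proof. exact: card_part (Av_sub F v). Qed.

Lemma c_sum n (F : {set {set BHV n.+1}}) : F \subset bh_edges n.+1 -> #|F| = \sum_(d < n.+1) cc F d.
Proof. exact: card_part. Qed.

Lemma fd_le2 n (F : {set {set BHV n.+1}}) v d : d < n.+1 -> fd F v d <= 2.
Proof.
move=> hd; rewrite -(card_star_dim v hd); apply: subset_leq_card.
by apply: setSI; apply: subsetIr.
Qed.

Lemma fd_le_f n (F : {set {set BHV n}}) v d : fd F v d <= fv F v.
Proof. by apply: subset_leq_card; apply: subsetIl. Qed.

Lemma fd_le_c n (F : {set {set BHV n}}) v d : fd F v d <= cc F d.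
Proof. by apply: subset_leq_card; apply/subsetP => e; rewrite !inE => /andP [/andP [-> _] ->]. Qed.

Lemma deg_F n (F : {set {set BHV n.+1}}) v : deg_minus F v + fv F v = 2 * n.+1.
Proof.
rewrite deg_star -(card_star v) -(cardsID F (star v)) addnC; congr (_ + _).
by rewrite /fv /Av setIC.
Qed.

Lemma deg_FD n (F : {set {set BHV n.+1}}) v m : m < n.+1 ->
  deg_minus (F :|: dimD n.+1 m) v + fv F v = 2 * n.+1 - 2 + fd F v m.
Proof.
move=> hm; rewrite deg_star.
have hX : #|star v :\: dimD n.+1 m| = 2 * n.+1 - 2.
  have := cardsID (dimD n.+1 m) (star v); rewrite card_star card_star_dim //; lia.
set X := star v :\: dimD n.+1 m.
have e1 : star v :\: (F :|: dimD n.+1 m) = X :\: F.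
  by apply/setP => e; rewrite !(in_setI, in_setD, in_setU) negb_or; case: (e \in F); case: (e \in dimD _ _); case: (e \in star v).
have e2 : X :&: F = Av F v :\: dimD n.+1 m.
  by apply/setP => e; rewrite /X /Av !(in_setI, in_setD, in_setU); case: (e \in F); case: (e \in dimD _ _); case: (e \in star v).
have h3 := cardsID F X.
have h4 := cardsID (dimD n.+1 m) (Av F v).
have hX2 : #|X| = 2 * n.+1 - 2 by exact: hX.
rewrite e1; rewrite e2 in h3; rewrite /fv /fd; lia.
Qed.

Lemma f_le n (F : {set {set BHV n.+1}}) v : mindeg_ge2 F -> fv F v <= 2 * n.+1 - 2.
Proof. move=> /(_ v) h; have := deg_F F v; lia. Qed.

Lemma ok1 n (F : {set {set BHV n.+1}}) m : m < n.+1 ->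
  (forall v, fv F v <= 2 * n.+1 - 4 + fd F v m) -> 2 <= n ->
  mindeg_ge2 (F :|: dimD n.+1 m).
Proof.
move=> hm h hn v; have := deg_FD F v hm; have := h v; lia.
Qed.

Lemma ok2 n (F : {set {set BHV n.+1}}) k z : k < n.+1 ->
  (forall v, fv F v <= 2 * n.+1 - 3 + fd F v k) ->
  (forall v, v != z -> fv F v <= 2 * n.+1 - 4 + fd F v k) -> 2 <= n ->
  noiso_atmost1_deg1 (F :|: dimD n.+1 k).
Proof.
move=> hk h1 h2 hn; split.
  by move=> v; have := deg_FD F v hk; have := h1 v; lia.
apply: (@leq_trans #|[set z]|); last by rewrite cards1.
apply: subset_leq_card; apply/subsetP => v.
rewrite !inE => /eqP hv; apply/negPn/negP => hz.
have := deg_FD F v hk; have := h2 v hz; lia.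
Qed.

Lemma edge_two n (e : {set BHV n}) u w : e \in bh_edges n -> u \in e -> w \in e -> u != w ->
  e = [set u; w].
Proof. by case/edgeP => a [b [_ ->]] hu hw huw; apply: pairset_in. Qed.

Lemma inAA n (F : {set {set BHV n}}) u w e : e \in Av F u :&: Av F w ->
  [/\ e \in F, e \in bh_edges n, u \in e & w \in e].
Proof. by rewrite in_setI !inAv => /andP [/and3P [-> -> ->] /and3P [_ _ ->]]. Qed.

Lemma pair_le1 n (F : {set {set BHV n}}) u w : u != w -> #|Av F u :&: Av F w| <= 1.
Proof.
move=> huw; apply: (@leq_trans #|[set [set u; w]]|); last by rewrite cards1.
apply: subset_leq_card; apply/subsetP => e /inAA [_ he hu hw].
by rewrite in_set1; apply/eqP; apply: edge_two.
Qed.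

Lemma sp_sum n (F : {set {set BHV n.+1}}) u w : u != w -> \sum_(d < n.+1) sp F u w d <= 1.
Proof.
move=> huw; rewrite /sp -card_part; first exact: pair_le1.
by apply/subsetP => e /inAA [].
Qed.

Lemma pair_par n (F : {set {set BHV n.+1}}) (u w : BHV n.+1) : u != w -> odd (u ord0) = odd (w ord0) ->
  #|Av F u :&: Av F w| = 0.
Proof.
move=> huw hp; apply/eqP; rewrite cards_eq0; apply/eqP/setP => e; rewrite in_set0.
apply/negP => /inAA [_ he hu hw].
move: (edge_two he hu hw huw) => ee; move: he; rewrite ee => /edgeP [a [b [hab]]].
case/pairset_eq => [[ha hb] | [ha hb]]; subst; move: hp; rewrite (adj_par hab); by case: (odd _).
Qed.

Lemma triple_empty n (F : {set {set BHV n}}) x y z : x != y -> y != z -> x != z ->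
  Av F x :&: Av F y :&: Av F z = set0.
Proof.
move=> hxy hyz hxz; apply/setP => e; rewrite in_set0; apply/negP.
rewrite in_setI => /andP [/inAA [_ he hx hy]]; rewrite inAv => /and3P [_ _ hz].
move: (edge_two he hx hy hxy) => ee; move: hz; rewrite ee !in_set2.
by case/orP => /eqP h; subst; rewrite eqxx in hxz hyz.
Qed.

Lemma c_two n (F : {set {set BHV n}}) u w d : fd F u d + fd F w d <= cc F d + sp F u w d.
Proof.
have h := cardsUI (Av F u :&: dimD n d) (Av F w :&: dimD n d).
have e1 : (Av F u :&: dimD n d) :&: (Av F w :&: dimD n d) = Av F u :&: Av F w :&: dimD n d.
  by rewrite setIACA setIid.
have h2 : #|(Av F u :&: dimD n d) :|: (Av F w :&: dimD n d)| <= cc F d.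
  apply: subset_leq_card; rewrite -setIUl; apply: setSI; apply/subsetP => e.
  by rewrite in_setU !inAv => /orP [] /and3P [].
rewrite e1 in h; rewrite /fd /sp; lia.
Qed.

Lemma sp_le n (F : {set {set BHV n}}) x y z d : x != y -> y != z -> x != z ->
  sp F x y d + sp F x z d <= fd F x d.
Proof.
move=> hxy hyz hxz.
have h := cardsUI (Av F x :&: Av F y :&: dimD n d) (Av F x :&: Av F z :&: dimD n d).
have e1 : (Av F x :&: Av F y :&: dimD n d) :&: (Av F x :&: Av F z :&: dimD n d) = set0.
  apply/setP => e; rewrite in_set0; apply/negP.
  move=> /setIP [/setIP [/setIP [hx hy] _] /setIP [/setIP [_ hz] _]].
  have : e \in Av F x :&: Av F y :&: Av F z by apply/setIP; split => //; apply/setIP.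
  by rewrite triple_empty // in_set0.
have h2 : #|(Av F x :&: Av F y :&: dimD n d) :|: (Av F x :&: Av F z :&: dimD n d)| <= fd F x d.
  apply: subset_leq_card; rewrite -setIUl; apply: setSI; rewrite -setIUr; apply: subsetIl.
rewrite e1 cards0 in h; rewrite /sp; lia.
Qed.

Lemma c_three n (F : {set {set BHV n}}) x y z d :
  fd F x d + fd F y d + fd F z d <= cc F d + sp F x y d + sp F y z d + sp F x z d.
Proof.
have h := bonf3 (Av F x :&: dimD n d) (Av F y :&: dimD n d) (Av F z :&: dimD n d).
have h2 : #|(Av F x :&: dimD n d) :|: (Av F y :&: dimD n d) :|: (Av F z :&: dimD n d)| <= cc F d.
  apply: subset_leq_card; rewrite -!setIUl; apply: setSI; apply/subsetP => e.
  by rewrite !in_setU !inAv => /orP [/orP [] | ] /and3P [].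
have e1 : forall a b, (Av F a :&: dimD n d) :&: (Av F b :&: dimD n d) = Av F a :&: Av F b :&: dimD n d.
  by move=> a b; rewrite setIACA setIid.
rewrite !e1 in h; rewrite /fd /sp; lia.
Qed.

Lemma heavy_sum3 n (F : {set {set BHV n}}) x y z :
  fv F x + fv F y + fv F z <= #|F| + #|Av F x :&: Av F y| + #|Av F y :&: Av F z| + #|Av F x :&: Av F z|.
Proof.
have h := bonf3 (Av F x) (Av F y) (Av F z).
have h2 : #|Av F x :|: Av F y :|: Av F z| <= #|F|.
  apply: subset_leq_card; apply/subsetP => e.
  by rewrite !in_setU !inAv => /orP [/orP [] | ] /and3P [].
rewrite /fv; lia.
Qed.

Lemma heavy_sum4 n (F : {set {set BHV n}}) x y z w :
  fv F x + fv F y + fv F z + fv F w <= #|F| + #|Av F x :&: Av F y| + #|Av F y :&: Av F z| + #|Av F x :&: Av F z|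
    + #|Av F x :&: Av F w| + #|Av F y :&: Av F w| + #|Av F z :&: Av F w|.
Proof.
have h := bonf4 (Av F x) (Av F y) (Av F z) (Av F w).
have h2 : #|Av F x :|: Av F y :|: Av F z :|: Av F w| <= #|F|.
  apply: subset_leq_card; apply/subsetP => e.
  by rewrite !in_setU !inAv => /orP [/orP [/orP [] | ] | ] /and3P [].
rewrite /fv; lia.
Qed.


Definition AL (k : nat) (P : nat -> bool) := all P (iota 0 k).
Notation "a ==>> b" := (if a then b else true) (at level 55, right associativity).

Definition g1_3 (xs ys zs : nat) (x y z c : nat) :=
  [&& 3 <= c, xs - x <= 2, ys - y <= 2 & zs - z <= 2].
Definition g2_3 (xs ys zs : nat) (x y z c : nat) :=
  [&& 2 <= c, xs - x <= 3, ys - y <= 3, zs - z <= 3 &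
   [|| (xs - x <= 2) && (ys - y <= 2), (xs - x <= 2) && (zs - z <= 2) | (ys - y <= 2) && (zs - z <= 2)]].
Definition concl3 xs ys zs x0 y0 z0 c0 x1 y1 z1 c1 x2 y2 z2 c2 :=
   [|| g1_3 xs ys zs x0 y0 z0 c0, g1_3 xs ys zs x1 y1 z1 c1, g1_3 xs ys zs x2 y2 z2 c2,
       g2_3 xs ys zs x0 y0 z0 c0 && g2_3 xs ys zs x1 y1 z1 c1,
       g2_3 xs ys zs x0 y0 z0 c0 && g2_3 xs ys zs x2 y2 z2 c2 |
       g2_3 xs ys zs x1 y1 z1 c1 && g2_3 xs ys zs x2 y2 z2 c2].
Definition chk3 : bool :=
 AL 3 (fun x0 => AL 3 (fun x1 => AL 3 (fun x2 => let xs := x0+x1+x2 in (3 <= xs <= 4) ==>>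
 AL 3 (fun y0 => AL 3 (fun y1 => AL 3 (fun y2 => let ys := y0+y1+y2 in (3 <= ys <= 4) ==>>
 AL 3 (fun z0 => AL 3 (fun z1 => AL 3 (fun z2 => let zs := z0+z1+z2 in (3 <= zs <= 4) ==>>
 AL 2 (fun a0 => AL 2 (fun a1 => AL 2 (fun a2 => (a0+a1+a2 <= 1) ==>>
 AL 2 (fun b0 => AL 2 (fun b1 => AL 2 (fun b2 => (b0+b1+b2 <= 1) ==>>
 AL 2 (fun e0 => AL 2 (fun e1 => AL 2 (fun e2 => (e0+e1+e2 <= 1) ==>>
 ((a0+a1+a2)+(b0+b1+b2)+(e0+e1+e2) <= 2) ==>>
 [&& a0 + e0 <= x0, a1 + e1 <= x1, a2 + e2 <= x2,
     a0 + b0 <= y0, a1 + b1 <= y1, a2 + b2 <= y2,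
     b0 + e0 <= z0, b1 + e1 <= z1 & b2 + e2 <= z2] ==>>
 let c0 := x0 + y0 + z0 - (a0 + b0 + e0) in
 let c1 := x1 + y1 + z1 - (a1 + b1 + e1) in
 let c2 := x2 + y2 + z2 - (a2 + b2 + e2) in
 (c0 + c1 + c2 == 7) ==>>
 concl3 xs ys zs x0 y0 z0 c0 x1 y1 z1 c1 x2 y2 z2 c2
 )))))))))))))))))).
Lemma chk3_ok : chk3. Proof. vm_compute. reflexivity. Qed.

Definition g1_2 (xs ys : nat) (x y c : nat) :=
  [&& 3 <= c, xs - x <= 2 & ys - y <= 2].
Definition g2_2 (xs ys : nat) (x y c : nat) :=
  [&& 2 <= c, xs - x <= 3, ys - y <= 3 & ((xs - x <= 2) || (ys - y <= 2))].
Definition concl2 xs ys x0 y0 c0 x1 y1 c1 x2 y2 c2 :=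
   [|| g1_2 xs ys x0 y0 c0, g1_2 xs ys x1 y1 c1, g1_2 xs ys x2 y2 c2,
       g2_2 xs ys x0 y0 c0 && g2_2 xs ys x1 y1 c1,
       g2_2 xs ys x0 y0 c0 && g2_2 xs ys x2 y2 c2 |
       g2_2 xs ys x1 y1 c1 && g2_2 xs ys x2 y2 c2].
Definition chk2 : bool :=
 AL 3 (fun x0 => AL 3 (fun x1 => AL 3 (fun x2 => let xs := x0+x1+x2 in (3 <= xs <= 4) ==>>
 AL 3 (fun y0 => AL 3 (fun y1 => AL 3 (fun y2 => let ys := y0+y1+y2 in (3 <= ys <= 4) ==>>
 AL 2 (fun a0 => AL 2 (fun a1 => AL 2 (fun a2 => (a0+a1+a2 <= 1) ==>>
 AL 8 (fun c0 => AL (8 - c0) (fun c1 => let c2 := 7 - c0 - c1 in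
 [&& x0 + y0 <= c0 + a0, x1 + y1 <= c1 + a1 & x2 + y2 <= c2 + a2] ==>>
 concl2 xs ys x0 y0 c0 x1 y1 c1 x2 y2 c2
 ))))))))))).
Lemma chk2_ok : chk2. Proof. vm_compute. reflexivity. Qed.


Definition Goal6 n (F : {set {set BHV n}}) :=
  (exists m : nat, m < n /\ 3 <= #|F :&: dimD n m| /\ mindeg_ge2 (F :|: dimD n m))
  \/
  (exists m m' : nat, m < n /\ m' < n /\ m <> m' /\
     2 <= #|F :&: dimD n m| /\ 2 <= #|F :&: dimD n m'| /\
     noiso_atmost1_deg1 (F :|: dimD n m) /\ noiso_atmost1_deg1 (F :|: dimD n m')).

Definition G2 n (F : {set {set BHV n}}) k := k < n /\ 2 <= #|F :&: dimD n k| /\ noiso_atmost1_deg1 (F :|: dimD n k).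

Lemma goodL n (F : {set {set BHV n.+1}}) m : 2 <= n -> m < n.+1 -> 3 <= cc F m ->
  (forall v, 2 * n.+1 - 3 <= fv F v -> fv F v <= 2 * n.+1 - 4 + fd F v m) -> Goal6 F.
Proof.
move=> hn hm hc hH; left; exists m; split => //; split => //.
apply: ok1 => // v; case: (leqP (2 * n.+1 - 3) (fv F v)) => h; first exact: hH.
lia.
Qed.

Lemma goodR n (F : {set {set BHV n.+1}}) k k' : k <> k' -> G2 F k -> G2 F k' -> Goal6 F.
Proof.
by move=> hk [h1 [h2 h3]] [h1' [h2' h3']]; right; exists k, k'.
Qed.

Lemma goodG2 n (F : {set {set BHV n.+1}}) k z : 2 <= n -> k < n.+1 -> 2 <= cc F k ->
  (forall v, 2 * n.+1 - 3 <= fv F v -> fv F v <= 2 * n.+1 - 3 + fd F v k) ->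
  (forall v, 2 * n.+1 - 3 <= fv F v -> v != z -> fv F v <= 2 * n.+1 - 4 + fd F v k) ->
  G2 F k.
Proof.
move=> hn hk hc h1 h2; split => //; split => //.
apply: (ok2 (z := z)) => // v.
  case: (leqP (2 * n.+1 - 3) (fv F v)) => h; first exact: h1. lia.
move=> hv; case: (leqP (2 * n.+1 - 3) (fv F v)) => h; first exact: h2. lia.
Qed.

Lemma sum3 (g : nat -> nat) : \sum_(d < 3) g d = g 0 + g 1 + g 2.
Proof. by rewrite !big_ord_recr big_ord0 /=. Qed.

Lemma pigeon n (F : {set {set BHV n.+1}}) : 2 <= n -> F \subset bh_edges n.+1 -> #|F| = 4 * n.+1 - 5 ->
  exists2 m, m < n.+1 & 3 <= cc F m.
Proof.
move=> hn hF hc.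
case: (pickP (fun d : 'I_n.+1 => 3 <= cc F d)) => [d hd | hno]; first by exists d.
have : #|F| <= \sum_(d < n.+1) 2.
  rewrite c_sum //; apply: leq_sum => d _; have := hno d; rewrite /= => /negbT; rewrite -ltnNge; lia.
rewrite sum_nat_const card_ord; lia.
Qed.


Lemma deficit n (F : {set {set BHV n.+1}}) v (m0 : 'I_n.+1) :
  \sum_(d < n.+1 | d != m0) (2 - fd F v d) + (2 - fd F v m0) + fv F v = 2 * n.+1.
Proof.
have h : \sum_(d < n.+1) (2 - fd F v d) + \sum_(d < n.+1) fd F v d = 2 * n.+1.
  rewrite -big_split /= (eq_bigr (fun _ => 2)); last by move=> d _; rewrite subnK // fd_le2.
  by rewrite sum_nat_const card_ord mulnC.
rewrite (bigD1 m0) //= in h; rewrite f_sum -h; congr (_ + _); rewrite addnC; congr (_ + _); exact: eq_bigl.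
Qed.

Lemma exists_full n (g : 'I_n.+1 -> nat) (m0 : 'I_n.+1) :
  \sum_(d < n.+1 | d != m0) (2 - g d) < n ->
  exists d : 'I_n.+1, d != m0 /\ 2 <= g d.
Proof.
move=> hs; case: (pickP (fun d => (d != m0) && (2 <= g d))) => [d /andP [h1 h2] | hno].
  by exists d.
exfalso; move: hs; rewrite ltnNge => /negP; apply.
apply: (@leq_trans (\sum_(d < n.+1 | d != m0) 1)).
  by rewrite sum1_card cardC1 card_ord.
apply: leq_sum => d hd; have := hno d; rewrite hd /= => /negbT; rewrite -ltnNge; lia.
Qed.

Lemma all_full n (g : 'I_n.+1 -> nat) (m0 : 'I_n.+1) :
  \sum_(d < n.+1 | d != m0) (2 - g d) = 0 -> forall d, d != m0 -> 2 <= g d.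
Proof.
move=> hs d hd; move: hs; rewrite (bigD1 d) //=; lia.
Qed.

Lemma two_others n (m0 : 'I_n.+1) : 2 <= n -> exists k1 k2 : 'I_n.+1, [/\ k1 != m0, k2 != m0 & k1 != k2].
Proof.
move=> hn.
have h0 : 0 < n.+1 by []. have h1 : 1 < n.+1 by lia. have h2 : 2 < n.+1 by lia.
case: (m0 =P Ordinal h0) => [e0|n0].
  by exists (Ordinal h1), (Ordinal h2); rewrite e0.
case: (m0 =P Ordinal h1) => [e1|n1].
  by exists (Ordinal h0), (Ordinal h2); rewrite e1.
exists (Ordinal h0), (Ordinal h1); split => //; apply/eqP => h; [apply: n0 | apply: n1]; by rewrite h.
Qed.

Lemma case_h0 n (F : {set {set BHV n.+1}}) : 2 <= n -> F \subset bh_edges n.+1 -> #|F| = 4 * n.+1 - 5 ->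
  (forall v, fv F v < 2 * n.+1 - 3) -> Goal6 F.
Proof.
move=> hn hF hc hH; case: (pigeon hn hF hc) => m hm hcm.
apply: (goodL hn hm hcm) => v hv; have := hH v; lia.
Qed.

Lemma case_h1 n (F : {set {set BHV n.+1}}) v : 2 <= n -> F \subset bh_edges n.+1 -> #|F| = 4 * n.+1 - 5 ->
  mindeg_ge2 F ->
  (forall x, 2 * n.+1 - 3 <= fv F x -> x = v) -> Goal6 F.
Proof.
move=> hn hF hc hmd hH; case: (pigeon hn hF hc) => m hm hcm.
have hfv := f_le v hmd.
case: (leqP (fv F v) (2 * n.+1 - 4 + fd F v m)) => hvm.
  by apply: (goodL hn hm hcm) => x hx; rewrite (hH x hx).
have hdef := deficit F v (Ordinal hm).
have hfm : fd F v (Ordinal hm) = fd F v m by [].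
rewrite hfm in hdef.
have hfdm := fd_le2 F v hm.
case: (fv F v =P 2 * n.+1 - 3 + fd F v m) => hv.
  have [k [hk hk2]] : exists k : 'I_n.+1, k != Ordinal hm /\ 2 <= fd F v k.
    have hs : \sum_(d < n.+1 | d != Ordinal hm) (2 - fd F v d) < n by lia.
    exact: exists_full hs.
  apply: (@goodR _ _ m k).
  - by move=> e; move/eqP: hk; apply; apply: val_inj => /=; rewrite -e.
  - apply: (goodG2 (z := v) hn hm (ltnW hcm)).
      by move=> x hx; rewrite (hH x hx); lia.
    by move=> x hx; rewrite (hH x hx) eqxx.
  - apply: (goodG2 (z := v) hn (ltn_ord k) (leq_trans hk2 (fd_le_c _ _ _))).
    + by move=> x hx; rewrite (hH x hx); have := f_le v hmd; lia.
    + by move=> x hx; rewrite (hH x hx) eqxx.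
have h0 : \sum_(d < n.+1 | d != Ordinal hm) (2 - fd F v d) = 0 by lia.
have hall := all_full h0.
case: (two_others (Ordinal hm) hn) => k1 [k2 [h1 h2 h12]].
have hG : forall k : 'I_n.+1, k != Ordinal hm -> G2 F k.
  move=> k hk; have hk2 := hall k hk.
  apply: (goodG2 (z := v) hn (ltn_ord k) (leq_trans hk2 (fd_le_c _ _ _))).
  + by move=> x hx; rewrite (hH x hx); lia.
  + by move=> x hx; rewrite (hH x hx) eqxx.
apply: (@goodR _ _ k1 k2); [ | exact: hG | exact: hG].
by move=> e; move: h12; rewrite (val_inj e) eqxx.
Qed.


Lemma sp_le1 n (F : {set {set BHV n}}) u w d : u != w -> sp F u w d <= 1.
Proof.
move=> huw; apply: leq_trans (pair_le1 F huw); apply: subset_leq_card; exact: subsetIl.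
Qed.

Lemma sum_ind (T : finType) (A : {set T}) : \sum_(d : T) (d \in A) = #|A|.
Proof. by rewrite -sum1_card [RHS]big_mkcond /=; apply: eq_bigr => d _; case: (d \in A). Qed.

Lemma case_h2_big n (F : {set {set BHV n.+1}}) u w : 3 <= n -> mindeg_ge2 F -> u != w ->
  2 * n.+1 - 3 <= fv F u -> 2 * n.+1 - 3 <= fv F w ->
  (forall x, 2 * n.+1 - 3 <= fv F x -> x = u \/ x = w) -> Goal6 F.
Proof.
move=> hn hmd huw hu hw hH.
have hfu := f_le u hmd; have hfw := f_le w hmd.
case: (pickP (fun d : 'I_n.+1 => (2 <= fd F u d) && (2 <= fd F w d))) => [d /andP [h1 h2] | hno].
  have := c_two F u w d; have := sp_le1 F d huw => hs hc.
  apply: (goodL (m := d)) => //; first lia.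
    lia.
  move=> x hx; case: (hH x hx) => ->; lia.
have hle : forall d : 'I_n.+1, fd F u d + fd F w d <= 3.
  move=> d; have := hno d; have := fd_le2 F u (ltn_ord d); have := fd_le2 F w (ltn_ord d).
  rewrite /=; case: (2 <= fd F u d) / leqP; case: (2 <= fd F w d) / leqP => //=; lia.
set T := [set d : 'I_n.+1 | fd F u d + fd F w d == 3].
have hT : 1 < #|T|.
  have hs : fv F u + fv F w <= \sum_(d < n.+1) (2 + (d \in T)).
    rewrite !f_sum -big_split /=; apply: leq_sum => d _; rewrite inE.
    have := hle d; case: eqP => /=; lia.
  rewrite big_split /= sum_ind sum_nat_const card_ord in hs; lia.
case/card_gt1P: hT => k1 [k2 [hk1 hk2 h12]].
have hG : forall k, k \in T -> G2 F k.
  move=> k; rewrite inE => /eqP hk.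
  have hs := sp_le1 F k huw; have hc := c_two F u w k.
  have hku := fd_le2 F u (ltn_ord k); have hkw := fd_le2 F w (ltn_ord k).
  apply: (goodG2 (z := if fd F u k == 1 then u else w)).
  + lia.
  + exact: ltn_ord.
  + lia.
  + by move=> x hx; case: (hH x hx) => ->; lia.
  + by move=> x hx; case: (hH x hx) => ->; case: (fd F u k =P 1) => h1; rewrite ?eqxx // => _; lia.
apply: (@goodR _ _ k1 k2); [ | exact: hG | exact: hG].
by move=> e; move: h12; rewrite (val_inj e) eqxx.
Qed.


Lemma ALP k P : AL k P -> forall i, i < k -> P i.
Proof. by move=> /allP h i hi; apply: h; rewrite mem_iota. Qed.

Lemma model2 x0 x1 x2 y0 y1 y2 a0 a1 a2 c0 c1 c2 :
  x0 < 3 -> x1 < 3 -> x2 < 3 -> y0 < 3 -> y1 < 3 -> y2 < 3 -> a0 < 2 -> a1 < 2 -> a2 < 2 ->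
  3 <= x0 + x1 + x2 <= 4 -> 3 <= y0 + y1 + y2 <= 4 -> a0 + a1 + a2 <= 1 ->
  c0 + c1 + c2 = 7 -> x0 + y0 <= c0 + a0 -> x1 + y1 <= c1 + a1 -> x2 + y2 <= c2 + a2 ->
  concl2 (x0 + x1 + x2) (y0 + y1 + y2) x0 y0 c0 x1 y1 c1 x2 y2 c2.
Proof.
move=> hx0 hx1 hx2 hy0 hy1 hy2 ha0 ha1 ha2 hxs hys has hc h0 h1 h2.
have := chk2_ok; rewrite /chk2.
move=> /ALP /(_ x0 hx0) /ALP /(_ x1 hx1) /ALP /(_ x2 hx2) /=; rewrite hxs.
move=> /ALP /(_ y0 hy0) /ALP /(_ y1 hy1) /ALP /(_ y2 hy2) /=; rewrite hys.
move=> /ALP /(_ a0 ha0) /ALP /(_ a1 ha1) /ALP /(_ a2 ha2) /=; rewrite has.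
have hc0 : c0 < 8 by lia. have hc1 : c1 < 8 - c0 by lia.
move=> /ALP /(_ c0 hc0) /ALP /(_ c1 hc1) /=.
have -> : 7 - c0 - c1 = c2 by lia.
by rewrite h0 h1 h2.
Qed.

Lemma model3 x0 x1 x2 y0 y1 y2 z0 z1 z2 a0 a1 a2 b0 b1 b2 e0 e1 e2 :
  x0 < 3 -> x1 < 3 -> x2 < 3 -> y0 < 3 -> y1 < 3 -> y2 < 3 -> z0 < 3 -> z1 < 3 -> z2 < 3 ->
  a0 < 2 -> a1 < 2 -> a2 < 2 -> b0 < 2 -> b1 < 2 -> b2 < 2 -> e0 < 2 -> e1 < 2 -> e2 < 2 ->
  3 <= x0 + x1 + x2 <= 4 -> 3 <= y0 + y1 + y2 <= 4 -> 3 <= z0 + z1 + z2 <= 4 ->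
  a0 + a1 + a2 <= 1 -> b0 + b1 + b2 <= 1 -> e0 + e1 + e2 <= 1 ->
  (a0+a1+a2)+(b0+b1+b2)+(e0+e1+e2) <= 2 ->
  [&& a0 + e0 <= x0, a1 + e1 <= x1, a2 + e2 <= x2,
     a0 + b0 <= y0, a1 + b1 <= y1, a2 + b2 <= y2,
     b0 + e0 <= z0, b1 + e1 <= z1 & b2 + e2 <= z2] ->
  (x0 + y0 + z0 - (a0 + b0 + e0)) + (x1 + y1 + z1 - (a1 + b1 + e1)) + (x2 + y2 + z2 - (a2 + b2 + e2)) = 7 ->
  concl3 (x0 + x1 + x2) (y0 + y1 + y2) (z0 + z1 + z2)
     x0 y0 z0 (x0 + y0 + z0 - (a0 + b0 + e0)) x1 y1 z1 (x1 + y1 + z1 - (a1 + b1 + e1))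
     x2 y2 z2 (x2 + y2 + z2 - (a2 + b2 + e2)).
Proof.
move=> hx0 hx1 hx2 hy0 hy1 hy2 hz0 hz1 hz2 ha0 ha1 ha2 hb0 hb1 hb2 he0 he1 he2.
move=> hxs hys hzs has hbs hes hp hP4 hc.
have := chk3_ok; rewrite /chk3.
move=> /ALP /(_ x0 hx0) /ALP /(_ x1 hx1) /ALP /(_ x2 hx2) /=; rewrite hxs.
move=> /ALP /(_ y0 hy0) /ALP /(_ y1 hy1) /ALP /(_ y2 hy2) /=; rewrite hys.
move=> /ALP /(_ z0 hz0) /ALP /(_ z1 hz1) /ALP /(_ z2 hz2) /=; rewrite hzs.
move=> /ALP /(_ a0 ha0) /ALP /(_ a1 ha1) /ALP /(_ a2 ha2) /=; rewrite has.
move=> /ALP /(_ b0 hb0) /ALP /(_ b1 hb1) /ALP /(_ b2 hb2) /=; rewrite hbs.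
move=> /ALP /(_ e0 he0) /ALP /(_ e1 he1) /ALP /(_ e2 he2) /=; rewrite hes hp hP4.
by rewrite hc.
Qed.


Lemma fv3 (F : {set {set BHV 3}}) v : fv F v = fd F v 0 + fd F v 1 + fd F v 2.
Proof. by rewrite f_sum sum3. Qed.

Lemma cc3 (F : {set {set BHV 3}}) : F \subset bh_edges 3 -> #|F| = cc F 0 + cc F 1 + cc F 2.
Proof. by move=> hF; rewrite c_sum // sum3. Qed.

Lemma sp3 (F : {set {set BHV 3}}) u w : #|Av F u :&: Av F w| = sp F u w 0 + sp F u w 1 + sp F u w 2.
Proof.
rewrite -(sum3 (fun d => sp F u w d)).
by apply: card_part; apply/subsetP => e /inAA [].
Qed.

Lemma case_h2_small (F : {set {set BHV 3}}) u w : F \subset bh_edges 3 -> #|F| = 7 -> mindeg_ge2 F -> u != w ->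
  3 <= fv F u -> 3 <= fv F w ->
  (forall x, 3 <= fv F x -> x = u \/ x = w) -> Goal6 F.
Proof.
move=> hF hc hmd huw hu hw hH.
have hfu := f_le u hmd; have hfw := f_le w hmd.
have L1 : forall m, m < 3 -> 3 <= cc F m -> fv F u - fd F u m <= 2 -> fv F w - fd F w m <= 2 -> Goal6 F.
  move=> m hm h1 h2 h3; apply: (goodL (n := 2) (m := m)) => //.
  by move=> x hx; case: (hH x hx) => ->; lia.
have L2 : forall k, k < 3 -> 2 <= cc F k -> fv F u - fd F u k <= 3 -> fv F w - fd F w k <= 3 ->
    (fv F u - fd F u k <= 2) || (fv F w - fd F w k <= 2) -> G2 F k.
  move=> k hk h1 h2 h3 h4; apply: (goodG2 (n := 2) (k := k) (z := if fv F u - fd F u k <= 2 then w else u)) => //.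
    by move=> x hx; case: (hH x hx) => ->; lia.
  move=> x hx; case: (hH x hx) => ->; case: (leqP (fv F u - fd F u k) 2) => h5 /=.
  - lia.
  - by rewrite eqxx.
  - by rewrite eqxx.
  - move=> _; move: h4; rewrite leqNgt h5 /= => h6; lia.
have hfd : forall v d, d < 3 -> fd F v d < 3 by move=> v d hd; have := fd_le2 F v hd; lia.
have hspd : forall d, sp F u w d < 2 by move=> d; have := sp_le1 F d huw; lia.
have hxs : 3 <= fd F u 0 + fd F u 1 + fd F u 2 <= 4 by rewrite -fv3; apply/andP; split; lia.
have hys : 3 <= fd F w 0 + fd F w 1 + fd F w 2 <= 4 by rewrite -fv3; apply/andP; split; lia.
have hsps : sp F u w 0 + sp F u w 1 + sp F u w 2 <= 1 by rewrite -sp3; exact: pair_le1.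
have hc' : cc F 0 + cc F 1 + cc F 2 = 7 by rewrite -cc3.
have := model2 (hfd u 0 isT) (hfd u 1 isT) (hfd u 2 isT) (hfd w 0 isT) (hfd w 1 isT) (hfd w 2 isT)
  (hspd 0) (hspd 1) (hspd 2) hxs hys hsps hc' (c_two F u w 0) (c_two F u w 1) (c_two F u w 2).
rewrite -!fv3.
rewrite /concl2 /g1_2 /g2_2.
move=> /orP [h|/orP [h|/orP [h|/orP [h|/orP [h|h]]]]].
- case/and3P: h => h1 h2 h3; exact: L1 h1 h2 h3.
- case/and3P: h => h1 h2 h3; exact: L1 h1 h2 h3.
- case/and3P: h => h1 h2 h3; exact: L1 h1 h2 h3.
- case/andP: h => /and4P [h1 h2 h3 h4] /and4P [h1' h2' h3' h4'].
  have g1 := L2 0 isT h1 h2 h3 h4; have g2 := L2 1 isT h1' h2' h3' h4'.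
  exact: (@goodR 2 F 0 1 (fun e => ltac:(discriminate e)) g1 g2).
- case/andP: h => /and4P [h1 h2 h3 h4] /and4P [h1' h2' h3' h4'].
  have g1 := L2 0 isT h1 h2 h3 h4; have g2 := L2 2 isT h1' h2' h3' h4'.
  exact: (@goodR 2 F 0 2 (fun e => ltac:(discriminate e)) g1 g2).
- case/andP: h => /and4P [h1 h2 h3 h4] /and4P [h1' h2' h3' h4'].
  have g1 := L2 1 isT h1 h2 h3 h4; have g2 := L2 2 isT h1' h2' h3' h4'.
  exact: (@goodR 2 F 1 2 (fun e => ltac:(discriminate e)) g1 g2).
Qed.


Lemma sp_sym n (F : {set {set BHV n}}) u w d : sp F u w d = sp F w u d.
Proof. by rewrite /sp [Av F u :&: _]setIC. Qed.

Lemma G2_3 (F : {set {set BHV 3}}) p q r k :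
  (forall x, 3 <= fv F x -> [\/ x = p, x = q | x = r]) ->
  k < 3 -> 2 <= cc F k -> fv F p - fd F p k <= 2 -> fv F q - fd F q k <= 2 -> fv F r - fd F r k <= 3 ->
  G2 F k.
Proof.
move=> hH hk hc hp hq hr; apply: (goodG2 (n := 2) (k := k) (z := r)) => //.
  by move=> x hx; case: (hH x hx) => ->; lia.
by move=> x hx; case: (hH x hx) => -> ; rewrite ?eqxx //; lia.
Qed.

Lemma arith3 x0 x1 x2 y0 y1 y2 z0 z1 z2 a0 a1 a2 b0 b1 b2 e0 e1 e2 c0 c1 c2 :
  c0 + c1 + c2 = 7 -> 3 <= x0 + x1 + x2 -> 3 <= y0 + y1 + y2 -> 3 <= z0 + z1 + z2 ->
  (a0 + a1 + a2) + (b0 + b1 + b2) + (e0 + e1 + e2) <= 2 ->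
  x0 + y0 + z0 <= c0 + a0 + b0 + e0 -> x1 + y1 + z1 <= c1 + a1 + b1 + e1 ->
  x2 + y2 + z2 <= c2 + a2 + b2 + e2 ->
  [/\ c0 = x0 + y0 + z0 - (a0 + b0 + e0), c1 = x1 + y1 + z1 - (a1 + b1 + e1)
    & c2 = x2 + y2 + z2 - (a2 + b2 + e2)].
Proof. move=> *; split; lia. Qed.

Lemma model3b x0 x1 x2 y0 y1 y2 z0 z1 z2 a0 a1 a2 b0 b1 b2 e0 e1 e2 xs ys zs c0 c1 c2 :
  x0 < 3 -> x1 < 3 -> x2 < 3 -> y0 < 3 -> y1 < 3 -> y2 < 3 -> z0 < 3 -> z1 < 3 -> z2 < 3 ->
  a0 < 2 -> a1 < 2 -> a2 < 2 -> b0 < 2 -> b1 < 2 -> b2 < 2 -> e0 < 2 -> e1 < 2 -> e2 < 2 ->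
  xs = x0 + x1 + x2 -> ys = y0 + y1 + y2 -> zs = z0 + z1 + z2 ->
  3 <= xs <= 4 -> 3 <= ys <= 4 -> 3 <= zs <= 4 ->
  a0 + a1 + a2 <= 1 -> b0 + b1 + b2 <= 1 -> e0 + e1 + e2 <= 1 ->
  (a0+a1+a2)+(b0+b1+b2)+(e0+e1+e2) <= 2 ->
  [&& a0 + e0 <= x0, a1 + e1 <= x1, a2 + e2 <= x2,
     a0 + b0 <= y0, a1 + b1 <= y1, a2 + b2 <= y2,
     b0 + e0 <= z0, b1 + e1 <= z1 & b2 + e2 <= z2] ->
  c0 + c1 + c2 = 7 ->
  c0 = x0 + y0 + z0 - (a0 + b0 + e0) -> c1 = x1 + y1 + z1 - (a1 + b1 + e1) ->
  c2 = x2 + y2 + z2 - (a2 + b2 + e2) ->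
  concl3 xs ys zs x0 y0 z0 c0 x1 y1 z1 c1 x2 y2 z2 c2.
Proof.
move=> hx0 hx1 hx2 hy0 hy1 hy2 hz0 hz1 hz2 ha0 ha1 ha2 hb0 hb1 hb2 he0 he1 he2 -> -> ->.
move=> hxs hys hzs has hbs hes hp hP4 hc hc0 hc1 hc2; subst c0 c1 c2.
exact: model3.
Qed.

Lemma rng34 a : 3 <= a -> a <= 2 * 3 - 2 -> 3 <= a <= 4.
Proof. by move=> *; apply/andP; split; lia. Qed.
Lemma lt3 a : a <= 2 -> a < 3. Proof. lia. Qed.
Lemma lt2 a : a <= 1 -> a < 2. Proof. lia. Qed.
Lemma sum2 a b c : (a = 0 \/ b = 0 \/ c = 0) -> a <= 1 -> b <= 1 -> c <= 1 -> a + b + c <= 2.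
Proof. lia. Qed.

Lemma case_h3_small (F : {set {set BHV 3}}) x y z : F \subset bh_edges 3 -> #|F| = 7 -> mindeg_ge2 F ->
  x != y -> y != z -> x != z ->
  3 <= fv F x -> 3 <= fv F y -> 3 <= fv F z ->
  (forall v, 3 <= fv F v -> [\/ v = x, v = y | v = z]) -> Goal6 F.
Proof.
move=> hF hc hmd hxy hyz hxz hx hy hz hH.
have hfx := f_le x hmd; have hfy := f_le y hmd; have hfz := f_le z hmd.
have L1 : forall m, m < 3 -> 3 <= cc F m -> fv F x - fd F x m <= 2 -> fv F y - fd F y m <= 2 ->
    fv F z - fd F z m <= 2 -> Goal6 F.
  move=> m hm h1 h2 h3 h4; apply: (goodL (n := 2) (m := m)) => //.
  by move=> v hv; case: (hH v hv) => ->; lia.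
have L2 : forall k, k < 3 -> g2_3 (fv F x) (fv F y) (fv F z) (fd F x k) (fd F y k) (fd F z k) (cc F k) -> G2 F k.
  move=> k hk; rewrite /g2_3 => /and5P [h1 h2 h3 h4 h].
  case/orP: h => [h | /orP [] h]; case/andP: h => h5 h6.
  - by apply: (@G2_3 F x y z).
  - apply: (@G2_3 F x z y) => //. by move=> v /hH [] ->; [apply: Or31 | apply: Or33 | apply: Or32].
  - apply: (@G2_3 F y z x) => //. by move=> v /hH [] ->; [apply: Or33 | apply: Or31 | apply: Or32].
have hfd : forall v d, d < 3 -> fd F v d < 3 by move=> v d hd; apply: lt3; exact: fd_le2.
have hspd : forall u w d, u != w -> sp F u w d < 2 by move=> u w d huw; apply: lt2; exact: sp_le1.
have hyx : y != x by rewrite eq_sym. have hzy : z != y by rewrite eq_sym. have hzx : z != x by rewrite eq_sym.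
have hxs0 := rng34 hx hfx; have hxs := hxs0; rewrite fv3 in hxs.
have hys0 := rng34 hy hfy; have hys := hys0; rewrite fv3 in hys.
have hzs0 := rng34 hz hfz; have hzs := hzs0; rewrite fv3 in hzs.
have has : sp F x y 0 + sp F x y 1 + sp F x y 2 <= 1 by rewrite -sp3; exact: pair_le1.
have hbs : sp F y z 0 + sp F y z 1 + sp F y z 2 <= 1 by rewrite -sp3; exact: pair_le1.
have hes : sp F x z 0 + sp F x z 1 + sp F x z 2 <= 1 by rewrite -sp3; exact: pair_le1.
have hp : (sp F x y 0 + sp F x y 1 + sp F x y 2) + (sp F y z 0 + sp F y z 1 + sp F y z 2)
          + (sp F x z 0 + sp F x z 1 + sp F x z 2) <= 2.
  have : (odd (x ord0) == odd (y ord0)) || (odd (y ord0) == odd (z ord0)) || (odd (x ord0) == odd (z ord0)).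
    by case: (odd (x ord0)); case: (odd (y ord0)); case: (odd (z ord0)).
  case/orP => [/orP [] | ] /eqP hpar; apply: sum2 => //.
  - by left; have := pair_par F hxy hpar; rewrite sp3.
  - by right; left; have := pair_par F hyz hpar; rewrite sp3.
  - by right; right; have := pair_par F hxz hpar; rewrite sp3.
have hP4 : [&& sp F x y 0 + sp F x z 0 <= fd F x 0, sp F x y 1 + sp F x z 1 <= fd F x 1,
     sp F x y 2 + sp F x z 2 <= fd F x 2,
     sp F x y 0 + sp F y z 0 <= fd F y 0, sp F x y 1 + sp F y z 1 <= fd F y 1,
     sp F x y 2 + sp F y z 2 <= fd F y 2,
     sp F y z 0 + sp F x z 0 <= fd F z 0, sp F y z 1 + sp F x z 1 <= fd F z 1 &
     sp F y z 2 + sp F x z 2 <= fd F z 2].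
  have X d : sp F x y d + sp F x z d <= fd F x d by exact: sp_le.
  have Y d : sp F x y d + sp F y z d <= fd F y d by rewrite (sp_sym F x y); exact: sp_le.
  have Z d : sp F y z d + sp F x z d <= fd F z d.
    by rewrite (sp_sym F y z) (sp_sym F x z); exact: sp_le.
  by repeat (apply/andP; split); [exact: X|exact: X|exact: X|exact: Y|exact: Y|exact: Y|exact: Z|exact: Z|exact: Z].
have hcs := cc3 hF; rewrite hc in hcs.
have [e0 e1 e2] := arith3 (esym hcs) (proj1 (andP hxs)) (proj1 (andP hys)) (proj1 (andP hzs)) hp
   (c_three F x y z 0) (c_three F x y z 1) (c_three F x y z 2).
have := model3b (hfd x 0 isT) (hfd x 1 isT) (hfd x 2 isT) (hfd y 0 isT) (hfd y 1 isT) (hfd y 2 isT)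
  (hfd z 0 isT) (hfd z 1 isT) (hfd z 2 isT)
  (hspd x y 0 hxy) (hspd x y 1 hxy) (hspd x y 2 hxy) (hspd y z 0 hyz) (hspd y z 1 hyz) (hspd y z 2 hyz)
  (hspd x z 0 hxz) (hspd x z 1 hxz) (hspd x z 2 hxz) (fv3 F x) (fv3 F y) (fv3 F z) hxs0 hys0 hzs0
  has hbs hes hp hP4 (esym hcs) e0 e1 e2.
rewrite /concl3 /g1_3.
move=> /orP [h|/orP [h|/orP [h|/orP [h|/orP [h|h]]]]].
- case/and4P: h => h1 h2 h3 h4; exact: L1 h1 h2 h3 h4.
- case/and4P: h => h1 h2 h3 h4; exact: L1 h1 h2 h3 h4.
- case/and4P: h => h1 h2 h3 h4; exact: L1 h1 h2 h3 h4.
- case/andP: h => h h'.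
  by apply: (@goodR 2 F 0 1) => //; [exact: L2 h | exact: L2 h'].
- case/andP: h => h h'.
  by apply: (@goodR 2 F 0 2) => //; [exact: L2 h | exact: L2 h'].
- case/andP: h => h h'.
  by apply: (@goodR 2 F 1 2) => //; [exact: L2 h | exact: L2 h'].
Qed.


Lemma three_of (T : finType) (A : {set T}) : 2 < #|A| ->
  exists x y z, [/\ x \in A, y \in A, z \in A & [/\ x != y, y != z & x != z]].
Proof.
move=> hA; have /card_gt1P [x [y [hx hy hxy]]] : 1 < #|A| by lia.
have : 0 < #|A :\: [set x; y]|.
  rewrite cardsD; have -> : A :&: [set x; y] = [set x; y].
    by apply/setIidPr; apply/subsetP => v; rewrite !inE => /orP [] /eqP ->.
  rewrite cards2 hxy; lia.
case/card_gt0P => z; rewrite !inE negb_or => /andP [/andP [hzx hzy] hz].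
by exists x, y, z; split => //; split => //; rewrite eq_sym.
Qed.

Lemma card3 (T : finType) (x y z : T) : x != y -> y != z -> x != z -> #|[set x; y; z]| = 3.
Proof.
move=> hxy hyz hxz; rewrite -setUA cardsU1 cards2 hyz !inE negb_or hxy hxz.
by [].
Qed.

Lemma fourth (T : finType) (A : {set T}) x y z : x \in A -> y \in A -> z \in A ->
  x != y -> y != z -> x != z -> 3 < #|A| -> exists w, [/\ w \in A, w != x, w != y & w != z].
Proof.
move=> hx hy hz hxy hyz hxz hA.
have : 0 < #|A :\: [set x; y; z]|.
  rewrite cardsD; have -> : A :&: [set x; y; z] = [set x; y; z].
    by apply/setIidPr; apply/subsetP => v; rewrite !inE => /orP [/orP [] | ] /eqP ->.
  rewrite card3 //; lia.
case/card_gt0P => w; rewrite !inE !negb_or => /andP [/andP [/andP [h1 h2] h3] hw].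
by exists w.
Qed.

Lemma only3 (T : finType) (A : {set T}) x y z : x \in A -> y \in A -> z \in A ->
  x != y -> y != z -> x != z -> #|A| = 3 -> forall v, v \in A -> [\/ v = x, v = y | v = z].
Proof.
move=> hx hy hz hxy hyz hxz hA v hv.
case: (v =P x) => [->|hvx]; first by apply: Or31.
case: (v =P y) => [->|hvy]; first by apply: Or32.
case: (v =P z) => [->|hvz]; first by apply: Or33.
have : 3 < #|A|.
  have hs : [set v; x; y; z] \subset A.
    by apply/subsetP => u; rewrite !inE => /orP [/orP [/orP [] | ] | ] /eqP ->.
  have := subset_leq_card hs; rewrite -!setUA cardsU1 setUA card3 // !inE.
  by move/eqP/negbTE: hvx => ->; move/eqP/negbTE: hvy => ->; move/eqP/negbTE: hvz => ->.
by rewrite hA.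
Qed.

Lemma pc n (F : {set {set BHV n.+1}}) (u w : BHV n.+1) : u != w ->
  #|Av F u :&: Av F w| <= (odd (u ord0) != odd (w ord0)).
Proof.
move=> huw; case: eqP => [hp|_]; first by rewrite (pair_par F huw hp).
exact: pair_le1.
Qed.

Lemma par4 (a b c d : bool) : (a != b) + (b != c) + (a != c) + (a != d) + (b != d) + (c != d) <= 4.
Proof. by case: a; case: b; case: c; case: d. Qed.

Lemma ar_h3 n a b c f p q r : 2 < n -> 2 * n.+1 - 3 <= a -> 2 * n.+1 - 3 <= b -> 2 * n.+1 - 3 <= c ->
  a + b + c <= f + p + q + r -> f = 4 * n.+1 - 5 -> p <= 1 -> q <= 1 -> r <= 1 -> False.
Proof. lia. Qed.

Lemma ar_h4 a b c d f p1 p2 p3 p4 p5 p6 (b1 b2 b3 b4 b5 b6 : bool) :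
  a + b + c + d <= f + p1 + p2 + p3 + p4 + p5 + p6 ->
  p1 <= b1 -> p2 <= b2 -> p3 <= b3 -> p4 <= b4 -> p5 <= b5 -> p6 <= b6 ->
  b1 + b2 + b3 + b4 + b5 + b6 <= 4 -> 3 <= a -> 3 <= b -> 3 <= c -> 3 <= d -> f = 7 -> False.
Proof. lia. Qed.

Lemma main n (F : {set {set BHV n.+1}}) : 2 <= n -> F \subset bh_edges n.+1 -> #|F| = 4 * n.+1 - 5 ->
  mindeg_ge2 F -> Goal6 F.
Proof.
move=> hn hF hc hmd.
set H := [set v | 2 * n.+1 - 3 <= fv F v].
have inH v : (v \in H) = (2 * n.+1 - 3 <= fv F v) by rewrite inE.
case: (ltnP 2 #|H|) => hH3.
  case: (three_of hH3) => x [y [z [hx hy hz [hxy hyz hxz]]]].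
  rewrite !inH in hx hy hz.
  have hs := heavy_sum3 F x y z.
  have p1 := pair_le1 F hxy; have p2 := pair_le1 F hyz; have p3 := pair_le1 F hxz.
  case: (ltnP 2 n) => hn3; first by case: (ar_h3 hn3 hx hy hz hs hc p1 p2 p3).
  have n2 : n = 2 by apply/eqP; rewrite eqn_leq hn3 hn.
  subst n.
  case: (ltnP 3 #|H|) => hH4.
    have hx' : x \in H by rewrite inH. have hy' : y \in H by rewrite inH. have hz' : z \in H by rewrite inH.
    case: (fourth hx' hy' hz' hxy hyz hxz hH4) => w [hw hwx hwy hwz].
    rewrite inH in hw.
    have hs4 := heavy_sum4 F x y z w.
    have q1 := pc F hxy; have q2 := pc F hyz; have q3 := pc F hxz.
    have q4 : #|Av F x :&: Av F w| <= (odd (x ord0) != odd (w ord0)) by apply: pc; rewrite eq_sym.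
    have q5 : #|Av F y :&: Av F w| <= (odd (y ord0) != odd (w ord0)) by apply: pc; rewrite eq_sym.
    have q6 : #|Av F z :&: Av F w| <= (odd (z ord0) != odd (w ord0)) by apply: pc; rewrite eq_sym.
    have hp4 := par4 (odd (x ord0)) (odd (y ord0)) (odd (z ord0)) (odd (w ord0)).
    by case: (ar_h4 hs4 q1 q2 q3 q4 q5 q6 hp4 hx hy hz hw hc).
  have h3 : #|H| = 3 by apply/eqP; rewrite eqn_leq hH4 hH3.
  have hx' : x \in H by rewrite inH. have hy' : y \in H by rewrite inH. have hz' : z \in H by rewrite inH.
  apply: (case_h3_small hF hc hmd hxy hyz hxz hx hy hz).
  by move=> v hv; apply: (only3 hx' hy' hz' hxy hyz hxz h3); rewrite inH.
case: (ltnP 1 #|H|) => hH2.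
  have /cards2P [u [w [huw eH]]] : #|H| == 2 by rewrite eqn_leq hH3 hH2.
  have hu : u \in H by rewrite eH !inE eqxx.
  have hw : w \in H by rewrite eH !inE eqxx orbT.
  rewrite !inH in hu hw.
  have hHx : forall x, 2 * n.+1 - 3 <= fv F x -> x = u \/ x = w.
    by move=> x; rewrite -inH eH !inE => /orP [] /eqP ->; [left | right].
  case: (ltnP 2 n) => hn3; first exact: case_h2_big hn3 hmd huw hu hw hHx.
  have n2 : n = 2 by apply/eqP; rewrite eqn_leq hn3 hn.
  subst n.
  exact: case_h2_small hF hc hmd huw hu hw hHx.
case: (ltnP 0 #|H|) => hH1.
  have /cards1P [v eH] : #|H| == 1 by rewrite eqn_leq hH2 hH1.
  apply: (case_h1 (v := v) hn hF hc hmd) => x.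
  by rewrite -inH eH inE => /eqP.
apply: case_h0 => // v; rewrite ltnNge -inH; apply/negP => hv.
by move: hH1; rewrite leqn0 cards_eq0 => /eqP eH; rewrite eH inE in hv.
Qed.

Theorem lemma6 (n : nat) (F : {set {set BHV n}}) :
  3 <= n ->
  F \subset bh_edges n ->
  #|F| = 4 * n - 5 ->
  mindeg_ge2 F ->
  (exists m : nat, m < n /\ 3 <= #|F :&: dimD n m| /\ mindeg_ge2 (F :|: dimD n m))
  \/
  (exists m m' : nat, m < n /\ m' < n /\ m <> m' /\
     2 <= #|F :&: dimD n m| /\ 2 <= #|F :&: dimD n m'| /\
     noiso_atmost1_deg1 (F :|: dimD n m) /\ noiso_atmost1_deg1 (F :|: dimD n m')).
Proof.
case: n F => [|n] F hn; first by [].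
exact: main.
Qed.
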